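(* For every closed convex cone $K$ in a finite-dimensional real Euclidean space $\mathbb{E}$, the tangential depth of $K$ is at most $\dim K$.
   Context: For a closed convex set $C$ and $x\in C$, $\mathcal{T}(x;C)=\operatorname{cl}\{d: x+\epsilon d\in C\text{ for some }\epsilon>0\}$ is the tangent cone. For a family $\mathcal{K}$ of closed convex sets, $\mathcal{T}(\mathcal{K})$ denotes the set of all tangent cones $\mathcal{T}(x;C)$ with $C\in\mathcal{K}$ and $x\in C$. Set $\mathcal{T}^0(\mathcal{K})=\mathcal{K}$ and $\mathcal{T}^k(\mathcal{K})=\mathcal{T}(\mathcal{T}^{k-1}(\mathcal{K}))$ for $k\ge 1$; for a single set $C$ write $\mathcal{T}^k(C)$ for $\mathcal{T}^k(\{C\})$. The tangential depth of a closed convex set $C$ is the smallest nonnegative integer $k$ such that $\mathcal{T}^{k+1}(C)=\mathcal{T}^k(C)$. *)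

(* Defs.v *)
(* classical reals. The Euclidean space E is modelled as R^n
   (vectors Fin.t n -> R) with the standard inner product. *)
From Stdlib Require Fin.
From Stdlib Require Import Reals List.
Open Scope R_scope.

Definition Vec (n : nat) := Fin.t n -> R.

Definition vzero {n} : Vec n := fun _ => 0.
Definition vadd {n} (u v : Vec n) : Vec n := fun i => u i + v i.
Definition vsub {n} (u v : Vec n) : Vec n := fun i => u i - v i.
Definition vscal {n} (a : R) (u : Vec n) : Vec n := fun i => a * u i.

Fixpoint dot (n : nat) : Vec n -> Vec n -> R :=
  match n with
  | O => fun _ _ => 0
  | S m => fun u v => u Fin.F1 * v Fin.F1
                      + dot m (fun i => u (Fin.FS i)) (fun i => v (Fin.FS i))
  end.

Definition norm {n} (u : Vec n) : R := sqrt (dot n u u).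

Definition VSet (n : nat) := Vec n -> Prop.
Definition Family (n : nat) := VSet n -> Prop.

Definition set_eq {n} (A B : VSet n) : Prop := forall x, A x <-> B x.
Definition fam_eq {n} (F G : Family n) : Prop := forall S, F S <-> G S.

Definition closure {n} (A : VSet n) : VSet n :=
  fun x => forall eps, 0 < eps -> exists y, A y /\ norm (vsub x y) < eps.

Definition is_closed {n} (A : VSet n) : Prop := forall x, closure A x -> A x.

Definition is_convex {n} (A : VSet n) : Prop :=
  forall x y t, A x -> A y -> 0 <= t <= 1 ->
    A (vadd (vscal t x) (vscal (1 - t) y)).

Definition is_cone {n} (A : VSet n) : Prop :=
  A vzero /\ forall x a, A x -> 0 <= a -> A (vscal a x).

Definition is_closed_convex_cone {n} (K : VSet n) : Prop :=
  is_closed K /\ is_convex K /\ is_cone K.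

Definition tangent_cone {n} (C : VSet n) (x : Vec n) : VSet n :=
  closure (fun d => exists eps, 0 < eps /\ C (vadd x (vscal eps d))).

Definition Tfam {n} (F : Family n) : Family n :=
  fun S => exists C x, F C /\ C x /\ set_eq S (tangent_cone C x).

(* T^k({C}); families are considered up to extensional equality of sets *)
Fixpoint Titer {n} (C : VSet n) (k : nat) : Family n :=
  match k with
  | O => fun S => set_eq S C
  | S j => Tfam (Titer C j)
  end.

Definition tangential_depth {n} (C : VSet n) (k : nat) : Prop :=
  fam_eq (Titer C (S k)) (Titer C k) /\
  forall j, fam_eq (Titer C (S j)) (Titer C j) -> (k <= j)%nat.

Fixpoint lin_comb {n} (cs : list R) (vs : list (Vec n)) : Vec n :=
  match cs, vs with
  | c :: cs', v :: vs' => vadd (vscal c v) (lin_comb cs' vs')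
  | _, _ => vzero
  end.

Definition lin_indep {n} (vs : list (Vec n)) : Prop :=
  forall cs, length cs = length vs ->
    (forall i, lin_comb cs vs i = 0) -> Forall (fun c => c = 0) cs.

Definition has_aff_indep {n} (C : VSet n) (m : nat) : Prop :=
  exists p0 ps, C p0 /\ Forall C ps /\ length ps = m /\
    lin_indep (map (fun p => vsub p p0) ps).

(* dim C = dimension of the affine hull of C (for nonempty C) *)
Definition aff_dim {n} (C : VSet n) (m : nat) : Prop :=
  has_aff_indep C m /\ ~ has_aff_indep C (S m).

(* Main.v *)
Require Import Defs.
From Stdlib Require Import Reals List Lra Lia Classical FunctionalExtensionality.
Open Scope R_scope.

Lemma vext {n} (u v : Vec n) : (forall i, u i = v i) -> u = v.
Proof. intros; apply functional_extensionality; auto. Qed.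

Fixpoint sabs (n : nat) : Vec n -> R :=
  match n with
  | O => fun _ => 0
  | S m => fun u => Rabs (u Fin.F1) + sabs m (fun i => u (Fin.FS i))
  end.

Lemma sabs_ge0 n (u : Vec n) : 0 <= sabs n u.
Proof. induction n; simpl; [lra|]. pose proof (Rabs_pos (u Fin.F1)). pose proof (IHn (fun i => u (Fin.FS i))). lra. Qed.

Lemma dot_ge0 n (u : Vec n) : 0 <= dot n u u.
Proof. induction n; simpl; [lra|]. pose proof (IHn (fun i => u (Fin.FS i))). nra. Qed.

Lemma dot_le_sabs n (u : Vec n) : dot n u u <= sabs n u * sabs n u.
Proof.
  induction n; simpl; [lra|].
  pose proof (IHn (fun i => u (Fin.FS i))). pose proof (sabs_ge0 n (fun i => u (Fin.FS i))).
  pose proof (Rabs_pos (u Fin.F1)).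
  assert (u Fin.F1 * u Fin.F1 = Rabs (u Fin.F1) * Rabs (u Fin.F1)).
  { rewrite <- Rabs_mult. rewrite Rabs_right; [lra|]. apply Rle_ge; nra. }
  nra.
Qed.

Lemma norm_le_sabs n (u : Vec n) : norm u <= sabs n u.
Proof.
  unfold norm. rewrite <- (sqrt_square (sabs n u)) by apply sabs_ge0.
  apply sqrt_le_1_alt. apply dot_le_sabs.
Qed.

Lemma coord_sq n (u : Vec n) i : u i * u i <= dot n u u.
Proof.
  induction n.
  - inversion i.
  - revert u. pattern i. apply Fin.caseS'.
    + intros u; simpl. pose proof (dot_ge0 n (fun i => u (Fin.FS i))). lra.
    + intros p u; simpl. pose proof (IHn (fun i => u (Fin.FS i)) p). simpl in H. pose proof (Rle_0_sqr (u Fin.F1)); unfold Rsqr in *; nra.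
Qed.

Lemma coord_le_norm n (u : Vec n) i : Rabs (u i) <= norm u.
Proof.
  unfold norm. rewrite <- sqrt_Rsqr_abs. apply sqrt_le_1_alt.
  unfold Rsqr. apply coord_sq.
Qed.

Lemma sabs_bound n (u : Vec n) a : (forall i, Rabs (u i) <= a) -> sabs n u <= INR n * a.
Proof.
  induction n; intros H; [simpl; lra|].
  pose proof (IHn (fun i => u (Fin.FS i)) (fun i => H (Fin.FS i))).
  pose proof (H Fin.F1). change (sabs (S n) u) with (Rabs (u Fin.F1) + sabs n (fun i => u (Fin.FS i))). rewrite S_INR. lra.
Qed.

Lemma sabs_le_norm n (u : Vec n) : sabs n u <= INR n * norm u.
Proof. apply sabs_bound. apply coord_le_norm. Qed.

Lemma sabs_add n (u v : Vec n) : sabs n (vadd u v) <= sabs n u + sabs n v.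
Proof.
  induction n; simpl; [lra|].
  pose proof (IHn (fun i => u (Fin.FS i)) (fun i => v (Fin.FS i))).
  pose proof (Rabs_triang (u Fin.F1) (v Fin.F1)).
  unfold vadd in *. lra.
Qed.

Lemma sabs_scal n a (u : Vec n) : sabs n (vscal a u) = Rabs a * sabs n u.
Proof.
  induction n; simpl; [lra|].
  pose proof (IHn (fun i => u (Fin.FS i))). unfold vscal in *. rewrite H, Rabs_mult. lra.
Qed.

Lemma closureE {n} (A : VSet n) x :
  closure A x <-> forall eps, 0 < eps -> exists y, A y /\ sabs n (vsub x y) < eps.
Proof.
  split.
  - intros H eps He.
    destruct (H (eps / (INR n + 1))) as [y [Ay Hy]].
    { pose proof (pos_INR n). apply Rdiv_lt_0_compat; lra. }
    exists y; split; auto.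
    pose proof (sabs_le_norm n (vsub x y)). pose proof (pos_INR n).
    pose proof (norm_le_sabs n (vsub x y)). pose proof (sabs_ge0 n (vsub x y)).
    assert ((INR n + 1) * norm (vsub x y) < eps).
    { apply Rmult_lt_reg_l with (/ (INR n + 1)). apply Rinv_0_lt_compat; lra.
      rewrite <- Rmult_assoc, Rinv_l by lra. unfold Rdiv in Hy. lra. }
    nra.
  - intros H eps He. destruct (H eps He) as [y [Ay Hy]]. exists y; split; auto.
    pose proof (norm_le_sabs n (vsub x y)). lra.
Qed.

Lemma cl_sub {n} (A : VSet n) x : A x -> closure A x.
Proof.
  intros Ax. apply closureE. intros eps He. exists x; split; auto.
  replace (vsub x x) with (vscal 0 x) by (apply vext; intros; unfold vsub, vscal; ring).
  rewrite sabs_scal, Rabs_R0. lra.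
Qed.

Lemma cl_mono {n} (A B : VSet n) : (forall x, A x -> B x) -> forall x, closure A x -> closure B x.
Proof. intros H x Hx eps He. destruct (Hx eps He) as [y [Ay Hy]]. exists y; auto. Qed.

Lemma sabs_tri n (x y z : Vec n) : sabs n (vsub x z) <= sabs n (vsub x y) + sabs n (vsub y z).
Proof.
  replace (vsub x z) with (vadd (vsub x y) (vsub y z)) by (apply vext; intros; unfold vadd, vsub; ring).
  apply sabs_add.
Qed.

Lemma cl_closed {n} (A : VSet n) : is_closed (closure A).
Proof.
  intros x Hx. apply closureE. intros eps He.
  rewrite closureE in Hx. destruct (Hx (eps/2)) as [y [Ay Hy]]; [lra|].
  rewrite closureE in Ay. destruct (Ay (eps/2)) as [z [Az Hz]]; [lra|].
  exists z; split; auto. pose proof (sabs_tri n x y z). lra.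
Qed.

Lemma cl_min {n} (A B : VSet n) : is_closed B -> (forall x, A x -> B x) -> forall x, closure A x -> B x.
Proof. intros HB H x Hx. apply HB. eapply cl_mono; eauto. Qed.

Lemma cl_convex {n} (A : VSet n) : is_convex A -> is_convex (closure A).
Proof.
  intros HA x y t Hx Hy Ht. apply closureE. intros eps He.
  rewrite closureE in Hx, Hy.
  destruct (Hx eps He) as [a [Aa Ha]]. destruct (Hy eps He) as [b [Ab Hb]].
  exists (vadd (vscal t a) (vscal (1 - t) b)). split; [apply HA; auto|].
  replace (vsub (vadd (vscal t x) (vscal (1 - t) y)) (vadd (vscal t a) (vscal (1 - t) b)))
    with (vadd (vscal t (vsub x a)) (vscal (1-t) (vsub y b)))
    by (apply vext; intros; unfold vadd, vsub, vscal; ring).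
  pose proof (sabs_add n (vscal t (vsub x a)) (vscal (1-t) (vsub y b))).
  rewrite !sabs_scal in H. rewrite (Rabs_right t), (Rabs_right (1-t)) in H by lra.
  set (s1 := sabs n (vsub x a)) in *. set (s2 := sabs n (vsub y b)) in *.
  destruct (Rle_dec s1 s2).
  - assert (t * (s1 - s2) <= 0) by nra ; lra.
  - assert ((1-t) * (s2 - s1) <= 0) by nra ; lra.
Qed.

Lemma cl_cone {n} (A : VSet n) : is_cone A -> is_cone (closure A).
Proof.
  intros [H0 HA]. split; [apply cl_sub; auto|].
  intros x a Hx Ha. destruct (Req_dec a 0) as [->|Ha0].
  - apply cl_sub. replace (vscal 0 x) with (@vzero n) by (apply vext; intros; unfold vzero, vscal; ring). auto.
  - apply closureE. rewrite closureE in Hx. intros eps He.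
    destruct (Hx (eps / a)) as [y [Ay Hy]]. { apply Rdiv_lt_0_compat; lra. }
    exists (vscal a y). split; [apply HA; auto|].
    replace (vsub (vscal a x) (vscal a y)) with (vscal a (vsub x y)) by (apply vext; intros; unfold vsub, vscal; ring).
    rewrite sabs_scal, Rabs_right by lra.
    apply Rmult_lt_compat_l with (r := a) in Hy; [|lra].
    replace (a * (eps / a)) with eps in Hy by (field; lra). lra.
Qed.

Definition ccc {n} (K : VSet n) := is_closed_convex_cone K.

Lemma ccc_add {n} (C : VSet n) u v : ccc C -> C u -> C v -> C (vadd u v).
Proof.
  intros [_ [Hc [_ Hs]]] Hu Hv.
  replace (vadd u v) with (vscal 2 (vadd (vscal (1/2) u) (vscal (1 - 1/2) v)))
    by (apply vext; intros; unfold vadd, vscal; field).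
  apply Hs; [|lra]. apply Hc; auto; lra.
Qed.

Lemma ccc_eq {n} (A B : VSet n) : set_eq A B -> ccc A -> ccc B.
Proof.
  intros E [Hc [Hv [H0 Hs]]]. repeat split.
  - intros x Hx. apply E. apply Hc. eapply cl_mono; [|exact Hx]. intros; apply E; auto.
  - intros x y t Hx Hy Ht. apply E. apply Hv; try apply E; auto.
  - apply E; auto.
  - intros x a Hx Ha. apply E. apply Hs; auto; apply E; auto.
Qed.

Definition Dset {n} (C : VSet n) x : VSet n := fun d => exists eps, 0 < eps /\ C (vadd x (vscal eps d)).

Lemma D_ccc_aux {n} (C : VSet n) x : ccc C -> C x -> is_convex (Dset C x) /\ is_cone (Dset C x).
Proof.
  intros HC Cx. pose proof HC as [_ [Hc [H0 Hs]]]. split.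
  - intros d1 d2 t [e1 [He1 H1]] [e2 [He2 H2]] Ht.
    set (e := Rmin e1 e2).
    assert (He : 0 < e) by (unfold e; apply Rmin_pos; auto).
    assert (Hm1 : e <= e1) by apply Rmin_l. assert (Hm2 : e <= e2) by apply Rmin_r.
    assert (P1 : C (vadd x (vscal e d1))).
    { replace (vadd x (vscal e d1)) with (vadd (vscal (e/e1) (vadd x (vscal e1 d1))) (vscal (1 - e/e1) x))
        by (apply vext; intros; unfold vadd, vscal; field; lra).
      apply Hc; auto. split. apply Rlt_le, Rdiv_lt_0_compat; lra.
      apply Rmult_le_reg_r with e1; auto. unfold Rdiv. rewrite Rmult_assoc, Rinv_l; lra. }
    assert (P2 : C (vadd x (vscal e d2))).
    { replace (vadd x (vscal e d2)) with (vadd (vscal (e/e2) (vadd x (vscal e2 d2))) (vscal (1 - e/e2) x))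
        by (apply vext; intros; unfold vadd, vscal; field; lra).
      apply Hc; auto. split. apply Rlt_le, Rdiv_lt_0_compat; lra.
      apply Rmult_le_reg_r with e2; auto. unfold Rdiv. rewrite Rmult_assoc, Rinv_l; lra. }
    exists e; split; auto.
    replace (vadd x (vscal e (vadd (vscal t d1) (vscal (1 - t) d2))))
      with (vadd (vscal t (vadd x (vscal e d1))) (vscal (1-t) (vadd x (vscal e d2))))
      by (apply vext; intros; unfold vadd, vscal; ring).
    apply Hc; auto.
  - split.
    + exists 1; split; [lra|].
      replace (vadd x (vscal 1 vzero)) with x by (apply vext; intros; unfold vadd, vscal, vzero; ring). auto.
    + intros d a [e [He Hd]] Ha. destruct (Req_dec a 0) as [->|Ha0].
      * exists 1; split; [lra|].
        replace (vadd x (vscal 1 (vscal 0 d))) with x by (apply vext; intros; unfold vadd, vscal; ring). auto.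
      * exists (e / a); split; [apply Rdiv_lt_0_compat; lra|].
        replace (vadd x (vscal (e / a) (vscal a d))) with (vadd x (vscal e d))
          by (apply vext; intros; unfold vadd, vscal; field; lra). auto.
Qed.

Lemma T_ccc {n} (C : VSet n) x : ccc C -> C x -> ccc (tangent_cone C x).
Proof.
  intros HC Cx. destruct (D_ccc_aux C x HC Cx) as [Hv Hs].
  split; [apply cl_closed|]. split; [apply cl_convex; auto|]. apply cl_cone; auto.
Qed.

Lemma T_sup {n} (C : VSet n) x : ccc C -> C x -> forall d, C d -> tangent_cone C x d.
Proof.
  intros HC Cx d Cd. apply cl_sub. exists 1; split; [lra|].
  replace (vadd x (vscal 1 d)) with (vadd x d) by (apply vext; intros; unfold vadd, vscal; ring).
  apply ccc_add; auto.
Qed.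

Definition neg {n} (v : Vec n) := vscal (-1) v.
Definition lin {n} (C : VSet n) (v : Vec n) := C v /\ C (neg v).

Lemma T_lin {n} (C : VSet n) x : ccc C -> C x -> lin (tangent_cone C x) x.
Proof.
  intros HC Cx. split; apply cl_sub; exists 1; split; try lra.
  - replace (vadd x (vscal 1 x)) with (vadd x x) by (apply vext; intros; unfold vadd, vscal; ring).
    apply ccc_add; auto.
  - replace (vadd x (vscal 1 (neg x))) with (@vzero n) by (apply vext; intros; unfold neg, vadd, vscal, vzero; ring).
    apply HC.
Qed.

Lemma T_sub {n} (C : VSet n) x : ccc C -> C x -> C (neg x) -> forall d, tangent_cone C x d -> C d.
Proof.
  intros HC Cx Cn. apply cl_min; [apply HC|].
  intros d [e [He Hd]].
  replace d with (vscal (/ e) (vadd (vadd x (vscal e d)) (neg x)))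
    by (apply vext; intros; unfold neg, vadd, vscal; field; lra).
  apply HC. apply ccc_add; auto. apply Rlt_le, Rinv_0_lt_compat; auto.
Qed.

Lemma T_in_V {n} (C V : VSet n) x :
  is_closed V -> (forall u v, V u -> V v -> V (vadd u v)) -> (forall a u, V u -> V (vscal a u)) ->
  (forall d, C d -> V d) -> C x -> forall d, tangent_cone C x d -> V d.
Proof.
  intros Hc Ha Hs HCV Cx. apply cl_min; auto.
  intros d [e [He Hd]].
  replace d with (vscal (/ e) (vadd (vadd x (vscal e d)) (vscal (-1) x)))
    by (apply vext; intros; unfold vadd, vscal; field; lra).
  apply Hs, Ha; auto.
Qed.

Lemma aux1 a C : 0 < a -> 0 <= C -> 0 < a / (C + 1).
Proof. intros; apply Rdiv_lt_0_compat; lra. Qed.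

Lemma aux2 a C t : 0 < a -> 0 <= C -> t < a / (C + 1) -> 0 <= t -> t * C < a.
Proof.
  intros Ha HC Ht Ht0.
  assert (t * (C + 1) < a).
  { apply Rmult_lt_compat_r with (r := C + 1) in Ht; [|lra].
    unfold Rdiv in Ht. rewrite Rmult_assoc, Rinv_l in Ht by lra. lra. }
  nra.
Qed.

Lemma lin_scal {n} (C : VSet n) a v : ccc C -> lin C v -> lin C (vscal a v).
Proof.
  intros HC [H1 H2]. pose proof HC as [_ [_ [_ Hs]]].
  destruct (Rle_dec 0 a).
  - split.
    + apply Hs; auto.
    + replace (neg (vscal a v)) with (vscal a (neg v)) by (apply vext; intros; unfold neg, vscal; ring).
      apply Hs; auto.
  - split.
    + replace (vscal a v) with (vscal (-a) (neg v)) by (apply vext; intros; unfold neg, vscal; ring).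
      apply Hs; auto; lra.
    + replace (neg (vscal a v)) with (vscal (-a) v) by (apply vext; intros; unfold neg, vscal; ring).
      apply Hs; auto; lra.
Qed.

Lemma lin_add {n} (C : VSet n) u v : ccc C -> lin C u -> lin C v -> lin C (vadd u v).
Proof.
  intros HC [H1 H2] [H3 H4]. split.
  - apply ccc_add; auto.
  - replace (neg (vadd u v)) with (vadd (neg u) (neg v)) by (apply vext; intros; unfold neg, vadd, vscal; ring).
    apply ccc_add; auto.
Qed.

Lemma lin_zero {n} (C : VSet n) : ccc C -> lin C vzero.
Proof.
  intros HC. replace (@vzero n) with (vscal 0 (@vzero n)) by (apply vext; intros; unfold vzero, vscal; ring).
  pose proof HC as [_ [_ [H0 Hs]]]. split. apply Hs; auto; lra.
  replace (neg (vscal 0 vzero)) with (@vzero n) by (apply vext; intros; unfold neg, vzero, vscal; ring). auto.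
Qed.

Lemma lin_comb_lin {n} (C : VSet n) ys : ccc C -> Forall (lin C) ys -> forall cs, lin C (lin_comb cs ys).
Proof.
  intros HC H. induction H; intros cs; destruct cs; simpl; try apply lin_zero; auto.
  apply lin_add; auto. apply lin_scal; auto.
Qed.

Lemma indep_nil {n} : lin_indep (@nil (Vec n)).
Proof. intros cs Hl _. destruct cs; [constructor|discriminate]. Qed.

Lemma indep_cons {n} (C : VSet n) x ys : ccc C -> lin_indep ys -> Forall (lin C) ys -> ~ lin C x ->
  lin_indep (x :: ys).
Proof.
  intros HC Hi Hf Hx cs Hl Hz. destruct cs as [|c cs]; [discriminate|].
  simpl in Hl, Hz. injection Hl as Hl.
  destruct (Req_dec c 0) as [->|Hc].
  - constructor; auto. apply Hi; auto. intros i. specialize (Hz i). unfold vadd, vscal in Hz. lra.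
  - exfalso. apply Hx.
    replace x with (vscal (- / c) (lin_comb cs ys)).
    + apply lin_scal; auto. apply lin_comb_lin; auto.
    + apply vext; intros i. specialize (Hz i). unfold vadd, vscal in *.
      apply Rmult_eq_reg_l with c; auto. field_simplify; auto. lra.
Qed.

Lemma Titer_eq {n} (K : VSet n) i A B : Titer K i A -> set_eq A B -> Titer K i B.
Proof.
  destruct i; simpl.
  - intros H E x. specialize (H x). specialize (E x). tauto.
  - intros [C [x [H1 [H2 H3]]]] E. exists C, x. repeat split; auto; intros; [apply H3, E | apply E, H3]; auto.
Qed.

Lemma Titer_ccc {n} (K : VSet n) : ccc K -> forall i S, Titer K i S -> ccc S.
Proof.
  intros HK. induction i; simpl; intros S H.
  - apply ccc_eq with K; auto. intros x; specialize (H x); tauto.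
  - destruct H as [C [x [H1 [H2 H3]]]]. apply ccc_eq with (tangent_cone C x).
    + intros y; specialize (H3 y); tauto.
    + apply T_ccc; eauto.
Qed.

Lemma Titer_V {n} (K V : VSet n) : ccc K -> (forall x, K x -> V x) -> is_closed V ->
  (forall u v, V u -> V v -> V (vadd u v)) -> (forall a u, V u -> V (vscal a u)) ->
  forall i S, Titer K i S -> forall x, S x -> V x.
Proof.
  intros HK HKV Hc Ha Hs. induction i; simpl; intros S H y Hy.
  - apply HKV, H, Hy.
  - destruct H as [C [x [H1 [H2 H3]]]]. apply H3 in Hy.
    eapply (T_in_V C V x Hc Ha Hs); eauto.
Qed.

Lemma Titer_mono1 {n} (K : VSet n) : ccc K -> forall i A, Titer K i A -> Titer K (S i) A.
Proof.
  intros HK i A H. pose proof (Titer_ccc K HK i A H) as HS.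
  exists A, vzero. split; auto. split; [apply HS|].
  intros d; split.
  - apply T_sup; auto. apply HS.
  - apply T_sub; auto. apply HS. apply (lin_zero A HS).
Qed.

Lemma Titer_mono {n} (K : VSet n) : ccc K -> forall i j S, (i <= j)%nat -> Titer K i S -> Titer K j S.
Proof.
  intros HK i j S Hij. induction Hij; auto. intros H. apply Titer_mono1; auto.
Qed.

Definition Good {n} (K : VSet n) i S :=
  Titer K i S /\ exists ys, lin_indep ys /\ Forall (lin S) ys /\ length ys = i.

Lemma Forall_impl' {A} (P Q : A -> Prop) l : (forall x, P x -> Q x) -> Forall P l -> Forall Q l.
Proof. intros H F; induction F; constructor; auto. Qed.

Lemma Good_exists {n} (K : VSet n) : ccc K -> forall j A, Titer K j A -> exists i, (i <= j)%nat /\ Good K i A.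
Proof.
  intros HK. induction j; intros A H.
  - exists 0%nat; split; auto. split; auto. exists nil; split; [apply indep_nil|split; auto].
  - pose proof H as [C [x [H1 [H2 H3]]]].
    destruct (IHj C H1) as [i [Hi [HCi [ys [Hys [Hf Hl]]]]]].
    pose proof (Titer_ccc K HK j C H1) as HC.
    destruct (classic (C (neg x))) as [Hn|Hn].
    + assert (E : set_eq C A).
      { intros y; split; intros Hy.
        - apply H3. apply T_sup; auto.
        - apply H3 in Hy. apply (T_sub C x HC H2 Hn y Hy). }
      exists i; split; [lia|]. split; [eapply Titer_eq; eauto|].
      exists ys; repeat split; auto. eapply Forall_impl'; [|exact Hf].
      intros y [Hy1 Hy2]; split; apply E; auto.
    + exists (S i); split; [lia|]. split.
      * exists C, x. auto.
      * exists (x :: ys). split; [|split].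
        -- eapply indep_cons; eauto. intros [_ Hc]; auto.
        -- constructor.
           ++ destruct (T_lin C x HC H2) as [A1 A2]. split; apply H3; auto.
           ++ eapply Forall_impl'; [|exact Hf]. intros y [Hy1 Hy2]; split; apply H3, T_sup; auto.
        -- simpl; lia.
Qed.

Lemma least_exists (P : nat -> Prop) : forall N j, (j <= N)%nat -> P j ->
  exists k, P k /\ (k <= j)%nat /\ forall j', P j' -> (k <= j')%nat.
Proof.
  induction N; intros j Hj Pj.
  - exists j; repeat split; auto; lia.
  - destruct (classic (exists j', (j' < j)%nat /\ P j')) as [[j' [Hj' Pj']]|Hno].
    + destruct (IHN j') as [k [Pk [Hk Hmin]]]; auto; try lia.
      exists k; repeat split; auto; lia.
    + exists j; repeat split; auto. intros j' Pj'.
      destruct (Nat.lt_ge_cases j' j); auto. exfalso; eauto.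
Qed.

Lemma main_abstract n (K V : VSet n) m : ccc K -> (forall x, K x -> V x) -> is_closed V ->
  (forall u v, V u -> V v -> V (vadd u v)) -> (forall a u, V u -> V (vscal a u)) ->
  (forall ys, lin_indep ys -> Forall V ys -> (length ys <= m)%nat) ->
  exists k, tangential_depth K k /\ (k <= m)%nat.
Proof.
  intros HK HKV Hc Ha Hs Hb.
  assert (Pm : fam_eq (Titer K (S m)) (Titer K m)).
  { intros A; split; [|apply Titer_mono1; auto].
    intros H. destruct (Good_exists K HK (S m) A H) as [i [Hi [HSi [ys [Hys [Hf Hl]]]]]].
    assert (i <= m)%nat.
    { rewrite <- Hl. apply Hb; auto. eapply Forall_impl'; [|exact Hf].
      intros y [Hy _]. eapply Titer_V; eauto. }
    eapply Titer_mono; eauto. }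
  destruct (least_exists (fun j => fam_eq (Titer K (S j)) (Titer K j)) m m (le_n m) Pm)
    as [k [Pk [Hk Hmin]]].
  exists k; split; auto. split; auto.
Qed.

Module MC.
From mathcomp Require Import all_boot all_order all_algebra.
From mathcomp Require Import Rstruct.
Import Order.TTheory GRing.Theory Num.Theory.

Section S.
Variable n : nat.
Local Open Scope ring_scope.

Definition ordF (j : 'I_n) : Fin.t n := Fin.of_nat_lt (elimT ssrnat.ltP (ltn_ord j)).

Lemma ordF_surj (k : Fin.t n) : exists j, ordF j = k.
Proof.
  destruct (Fin.to_nat k) as [p Hp] eqn:E.
  have Hp' : (p < n)%N by apply/ssrnat.ltP.
  exists (Ordinal Hp'). rewrite /ordF /=.
  rewrite -(Fin.of_nat_to_nat_inv k) E /=. apply: Fin.of_nat_ext.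
Qed.

Definition vec (v : Vec n) : 'rV[R]_n := \row_j v (ordF j).

Lemma vec_add u v : vec (vadd u v) = (vec u + vec v)%R.
Proof. by apply/rowP => j; rewrite !mxE. Qed.
Lemma vec_scal a u : vec (vscal a u) = (a *: vec u)%R.
Proof. by apply/rowP => j; rewrite !mxE. Qed.
Lemma vec_zero : vec vzero = 0%R.
Proof. by apply/rowP => j; rewrite !mxE. Qed.
Lemma vec_eq0 z : vec z = 0%R -> z = vzero.
Proof.
  move=> H. apply: functional_extensionality => k.
  have [j <-] := ordF_surj k. by have := congr1 (fun M : 'rV[R]_n => M ord0 j) H; rewrite !mxE.
Qed.

Lemma vec_lc (ys : list (Vec n)) (cs : list R) : size cs = size ys ->
  vec (lin_comb cs ys) = (\sum_(i < size ys) nth 0 cs i *: vec (nth vzero ys i))%R.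
Proof.
  elim: ys cs => [|y ys IH] [|c cs] //= H.
  - by rewrite big_ord0 vec_zero.
  - rewrite big_ord_recl /= vec_add vec_scal IH; last by case: H.
    by [].
Qed.

Lemma vec_lc_sub m (B : 'M[R]_(m, n)) ys cs :
  (forall y, In y ys -> (vec y <= B)%MS) -> (vec (lin_comb cs ys) <= B)%MS.
Proof.
  elim: ys cs => [|y ys IH] [|c cs] /= H; rewrite ?vec_zero ?sub0mx //.
  rewrite vec_add vec_scal addmx_sub // ?scalemx_sub //; auto.
Qed.

Lemma Forall_nth0 (cs : list R) i : Forall (fun c => c = 0) cs -> nth 0%R cs i = 0%R.
Proof. elim: cs i => [|c cs IH] [|i] //= H; inversion H; auto. Qed.

Lemma In_nth_ssr (ys : list (Vec n)) d i : (i < size ys)%N -> In (nth d ys i) ys.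
Proof. elim: ys i => [|y ys IH] [|i] //= H; [left|right]; auto. Qed.

Lemma steinitz m (B : 'M[R]_(m, n)) (ys : list (Vec n)) :
  lin_indep ys -> (forall y, In y ys -> (vec y <= B)%MS) -> (size ys <= m)%N.
Proof.
  move=> Hi Hs. set p := size ys.
  pose Y := (\matrix_(i < p) vec (nth vzero ys i))%R.
  have HY : (Y <= B)%MS.
  { apply/row_subP => i. rewrite rowK. apply: Hs. apply: In_nth_ssr. exact: ltn_ord. }
  have Hf : row_free Y.
  { apply: inj_row_free => w Hw.
    pose cs := map (w ord0) (enum 'I_p).
    have Hcs : size cs = size ys by rewrite size_map size_enum_ord.
    have E : vec (lin_comb cs ys) = (w *m Y)%R.
    { rewrite vec_lc // mulmx_sum_row. apply: eq_bigr => i _.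
      rewrite rowK. congr (_ *: _). rewrite (nth_map i) ?size_enum_ord // nth_ord_enum //. }
    rewrite Hw in E.
    have Z := Hi cs Hcs (fun i => f_equal (fun f => f i) (vec_eq0 _ E)).
    apply/rowP => i. rewrite mxE. have := Forall_nth0 cs i Z.
    rewrite (nth_map i) ?size_enum_ord // nth_ord_enum //. }
  have := mxrankS HY. rewrite (eqP Hf) => H. exact: leq_trans H (rank_leq_row B).
Qed.

Lemma vec_sub u v : vec (vsub u v) = vec u - vec v.
Proof. by apply/rowP => j; rewrite !mxE. Qed.

Lemma RabsE (r : R) : Rabs r = `|r|.
Proof. reflexivity. Qed.

Lemma RmultE' (a b : R) : Rmult a b = a * b.
Proof. reflexivity. Qed.

Lemma entry_bound (u : Vec n) m' (N : 'M[R]_(n, m')) j :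
  Rle (Rabs ((vec u *m N) ord0 j)) (norm u * \sum_i `|N i j|).
Proof.
  apply/RleP. rewrite mxE RabsE. apply: (le_trans (ler_norm_sum _ _ _)).
  rewrite RmultE' mulr_sumr. apply: ler_sum => i _. rewrite mxE normrM. apply: ler_wpM2r => //.
  apply/RleP. rewrite -RabsE. exact: coord_le_norm.
Qed.

Lemma span_closed m (B : 'M[R]_(m, n)) : is_closed (fun x => (vec x <= B)%MS).
Proof.
  move=> x Hx. rewrite submxE. apply/eqP/rowP => j. rewrite [RHS]mxE.
  set N := cokermx B. set C := \sum_i `|N i j|.
  set e := (vec x *m N) ord0 j.
  have HC : Rle 0 C. { apply/RleP. apply: sumr_ge0 => i _. exact: normr_ge0. }
  have key : forall y, (vec y <= B)%MS -> Rle (Rabs e) (norm (vsub x y) * C).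
  { move=> y. rewrite submxE => /eqP Hy.
    have -> : e = (vec (vsub x y) *m N) ord0 j.
    { rewrite vec_sub mulmxBl Hy subr0. by []. }
    exact: entry_bound. }
  case: (Req_dec e 0) => [He|Hne]; first exact: He.
  exfalso. have Hlt : Rlt 0 (Rabs e) := Rabs_pos_lt e Hne.
  have [y [Hy Hn]] := Hx _ (aux1 _ _ Hlt HC).
  have K1 := key y Hy.
  have K2 := aux2 _ _ _ Hlt HC Hn (sqrt_pos _).
  lra.
Qed.

Lemma In_nth_ex (bs : list (Vec n)) b : In b bs -> exists i, (i < size bs)%N /\ nth vzero bs i = b.
Proof.
  elim: bs => [|c bs IH] //= [->|H]; first by exists 0%N.
  have [i [Hi <-]] := IH H. by exists i.+1.
Qed.

Lemma size_length (ys : list (Vec n)) : length ys = size ys.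
Proof. by elim: ys => //= y ys ->. Qed.

Lemma span_space (bs : list (Vec n)) : exists V : VSet n, is_closed V /\
  (forall u v, V u -> V v -> V (vadd u v)) /\ (forall a u, V u -> V (vscal a u)) /\
  V vzero /\ Forall V bs /\
  (forall ys, lin_indep ys -> Forall V ys -> Peano.le (length ys) (length bs)).
Proof.
  pose B := (\matrix_(i < size bs) vec (nth vzero bs i)).
  exists (fun x => (vec x <= B)%MS). split; [exact: span_closed|]. split; [|split; [|split; [|split]]].
  - move=> u v Hu Hv. rewrite vec_add. exact: addmx_sub.
  - move=> a u Hu. rewrite vec_scal. exact: scalemx_sub.
  - rewrite vec_zero. exact: sub0mx.
  - apply/Forall_forall => b Hb. have [i [Hi <-]] := In_nth_ex bs b Hb.
    have -> : vec (nth vzero bs i) = row (Ordinal Hi) B by rewrite rowK.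
    exact: row_sub.
  - move=> ys Hi Hf. rewrite !size_length. apply/ssrnat.leP. apply: (steinitz _ B) => //.
    move=> y Hy. by move/Forall_forall: Hf => /(_ y Hy).
Qed.

End S.
End MC.

Set Bullet Behavior "Strict Subproofs".

Lemma lin_comb_W {n} (W : VSet n) ys : W vzero -> (forall u v, W u -> W v -> W (vadd u v)) ->
  (forall a u, W u -> W (vscal a u)) -> Forall W ys -> forall cs, W (lin_comb cs ys).
Proof.
  intros H0 Ha Hs H. induction H; intros cs; destruct cs; simpl; auto.
Qed.

Lemma indep_cons_W {n} (W : VSet n) x ys : W vzero -> (forall u v, W u -> W v -> W (vadd u v)) ->
  (forall a u, W u -> W (vscal a u)) -> Forall W ys -> lin_indep ys -> ~ W x -> lin_indep (x :: ys).
Proof.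
  intros H0 Ha Hs Hf Hi Hx cs Hl Hz. destruct cs as [|c cs]; [discriminate|].
  simpl in Hl, Hz. injection Hl as Hl.
  destruct (Req_dec c 0) as [->|Hc].
  - constructor; auto. apply Hi; auto. intros i. specialize (Hz i). unfold vadd, vscal in Hz. lra.
  - exfalso. apply Hx.
    replace x with (vscal (- / c) (lin_comb cs ys)).
    + apply Hs. apply lin_comb_W; auto.
    + apply vext; intros i. specialize (Hz i). unfold vadd, vscal in *.
      apply Rmult_eq_reg_l with c; auto. field_simplify; auto. lra.
Qed.

Lemma max_exists (Q : nat -> Prop) N : Q 0%nat ->
  exists L, (L <= N)%nat /\ Q L /\ forall L', Q L' -> (L' <= N)%nat -> (L' <= L)%nat.
Proof.
  intros Q0. induction N.
  - exists 0%nat. split; [lia|]. split; [assumption|intros; lia].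
  - destruct (classic (Q (S N))) as [HQ|HQ].
    + exists (S N). split; [lia|]. split; [assumption|intros; lia].
    + destruct IHN as [L [HL [QL Hmax]]]. exists L. split; [lia|]. split; [assumption|].
      intros L' QL' HL'. destruct (Nat.eq_dec L' (S N)) as [->|Hne]; [tauto|]. apply Hmax; auto; lia.
Qed.

Lemma map_vsub0 {n} (l : list (Vec n)) : map (fun p => vsub p vzero) l = l.
Proof.
  induction l; simpl; auto. rewrite IHl. f_equal. apply vext; intros; unfold vsub, vzero; ring.
Qed.

Theorem theorem3p2 (n : nat) (K : VSet n) (m : nat) :
  is_closed_convex_cone K -> aff_dim K m ->
  exists k, tangential_depth K k /\ (k <= m)%nat.
Proof.
  intros HK [_ Hnot].
  destruct (max_exists (fun L => exists bs, Forall K bs /\ lin_indep bs /\ length bs = L) m)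
    as [L [HLm [[bs [Hbs [Hbi Hbl]]] Hmax]]].
  { exists nil; repeat split; auto. apply indep_nil. }
  destruct (MC.span_space n bs) as [V [Hc [Ha [Hs [H0 [HbV Hb]]]]]].
  apply main_abstract with V; auto.
  - intros k Kk. destruct (classic (V k)) as [Hk|Hk]; auto. exfalso.
    assert (Hi : lin_indep (k :: bs)) by (eapply indep_cons_W; eauto).
    destruct (Nat.eq_dec L m) as [->|Hne].
    + apply Hnot. exists vzero, (k :: bs). split; [apply HK|]. split; [constructor; auto|].
      split; [simpl; lia|]. rewrite map_vsub0. auto.
    + assert (S L <= L)%nat; [|lia].
      apply Hmax; [|lia]. exists (k :: bs); repeat split; auto. simpl; lia.
  - intros ys Hi Hf. specialize (Hb ys Hi Hf). lia.
Qed.
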